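(* For $r\geq 2$, $0\leq \alpha\leq 1-\frac{1}{r}$ and every $n\ge 1$, $\lambda_{\alpha}(T_{n,r})\leq \left(1-\frac{1}{r}\right)n$.
   Context: $\lambda_\alpha(G)$ is the largest eigenvalue of $A_\alpha(G)=\alpha D(G)+(1-\alpha)A(G)$ ($A$ adjacency matrix, $D$ diagonal degree matrix). $T_{n,r}$ is the $r$-partite Turán graph on $n$ vertices (complete $r$-partite graph with part sizes differing by at most one). *)

(* Defs.v *)
From mathcomp Require Import all_boot all_order all_algebra.
From mathcomp Require Import reals.
Set Implicit Arguments. Unset Strict Implicit. Unset Printing Implicit Defensive.
Import Order.TTheory GRing.Theory Num.Theory.
Local Open Scope ring_scope.

(* Turan graph T_{n,r} on vertex set 'I_n: vertex i lies in part (i %% r);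
   the r parts {i | i %% r = k} have sizes differing by at most one. *)
Definition turan_adj (n r : nat) (i j : 'I_n) : bool := (i %% r != j %% r)%N.

Definition turan_deg (n r : nat) (i : 'I_n) : nat := #|[pred j | turan_adj r i j]|.

Definition turan_A (R : ringType) (n r : nat) : 'M[R]_n :=
  \matrix_(i, j) (turan_adj r i j)%:R.

Definition turan_D (R : ringType) (n r : nat) : 'M[R]_n :=
  \matrix_(i, j) ((i == j)%:R * (turan_deg r i)%:R).

Definition A_alpha_turan (R : comRingType) (alpha : R) (n r : nat) : 'M[R]_n :=
  alpha *: turan_D R n r + (1 - alpha) *: turan_A R n r.

(* Main.v *)
Require Import Defs.
From mathcomp Require Import all_boot all_order all_algebra.
From mathcomp Require Import reals.
From mathcomp Require Import ring lra.
Import Order.TTheory GRing.Theory Num.Theory.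
Local Open Scope ring_scope.
Lemma tangent (R : realFieldType) (b x m : R) : 0 <= b -> 0 < x -> 0 < m ->
  1/(b+x) <= (b + m^+2/x)/(b+m)^+2.
Proof.
move=> b0 x0 m0.
have bx : 0 < b + x by lra.
have bm : 0 < (b + m)^+2 by apply: exprn_gt0; lra.
have -> : b + m^+2/x = (b*x + m^+2)/x by field; lra.
rewrite ler_pdivrMr // -mulrA -invfM mulrAC ler_pdivlMr; last by apply: mulr_gt0.
rewrite mul1r. have := mulr_ge0 b0 (sqr_ge0 (x - m)). nra.
Qed.
Lemma sum_invN (R : realFieldType) n r : (0 < r)%N ->
  \sum_(i : 'I_n) 1 / (#|[pred j : 'I_n | (j %% r == i %% r)%N]|)%:R <= r%:R :> R.
Proof.
move=> r0.
pose p (i:'I_n) : 'I_r := Ordinal (ltn_pmod i r0).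
rewrite (partition_big p xpredT) //=.
have -> : r%:R = \sum_(k : 'I_r) (1:R) by rewrite sumr_const card_ord.
apply: ler_sum => k _.
pose A := [pred i : 'I_n | p i == k].
rewrite (eq_bigl (fun i => i \in A)) //.
rewrite (eq_bigr (fun _ => 1 / (#|A|)%:R)); last first.
  move=> i Hi; have Hk : (i %% r = k)%N by move: Hi; rewrite inE -val_eqE /= => /eqP.
  congr (_ / _%:R); apply: eq_card => j; rewrite !inE -val_eqE /= Hk.
  done.
rewrite sumr_const.
case: (posnP #|A|) => [->|Apos]; first by rewrite mulr0n ler01.
rewrite -[_ *+ _]mulr_natr div1r mulVf // pnatr_eq0 -lt0n Apos.
done.
Qed.

Theorem lemma5p8 (R : realType) (r n : nat) (alpha : R) :
  (2 <= r)%N -> (1 <= n)%N ->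
  0 <= alpha -> alpha <= 1 - 1 / r%:R ->
  forall mu : R, eigenvalue (A_alpha_turan alpha n r) mu ->
    mu <= (1 - 1 / r%:R) * n%:R.
Proof.
move=> r2 n1 a0 a1 mu /eigenvalueP [v Hv vn0].
rewrite leNgt; apply/negP => muc.
pose w i := v 0 i.
pose N (i : 'I_n) := #|[pred j : 'I_n | (j %% r == i %% r)%N]|.
pose S (i : 'I_n) := \sum_(j : 'I_n | (j %% r == i %% r)%N) w j.
pose T := \sum_j w j.
have degE i : (turan_deg r i + N i = n)%N.
  rewrite /turan_deg /N addnC -[n in RHS]card_ord -(cardC [pred j : 'I_n | (j %% r == i %% r)%N]).
  congr (_ + _)%N; apply: eq_card => j; rewrite !inE /turan_adj eq_sym.
  done.
have eqi i : mu * w i = alpha * (turan_deg r i)%:R * w i + (1 - alpha) * (T - S i).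
  have := congr1 (fun M : 'rV_n => M 0 i) Hv; rewrite !mxE => <-.
  under eq_bigr => j _ do rewrite /A_alpha_turan !mxE mulrDr.
  rewrite big_split /= (bigD1 i) //= big1 ?addr0; last first.
    by move=> j /negbTE ji; rewrite ji mul0r mulr0 mulr0.
  rewrite eqxx mul1r mulrC; congr (_ + _).
  rewrite /T /S [in RHS](bigID (fun j : 'I_n => (j %% r == i %% r)%N)) /= addrAC subrr add0r mulr_sumr.
  rewrite (bigID (fun j : 'I_n => (j %% r == i %% r)%N)) /= big1 ?add0r; last first.
    by move=> j ji; rewrite /turan_adj ji mulr0 mulr0.
  apply: eq_bigr => j ji; rewrite /turan_adj ji mulr1 mulrC.
  done.
have r0 : 0 < r%:R :> R by rewrite ltr0n; apply: leq_trans r2.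
have n0 : 0 < n%:R :> R by rewrite ltr0n.
have Npos i : (0 < N i)%N by apply/card_gt0P; exists i; rewrite inE.
have degR i : (turan_deg r i)%:R = n%:R - (N i)%:R :> R.
  by rewrite -[in n%:R](degE i) natrD addrK.
have degn (i : 'I_n) : (turan_deg r i)%:R <= n%:R :> R by rewrite degR; have := ler0n R (N i); lra.
pose m : R := r%:R^-1 * n%:R.
have m0 : 0 < m by rewrite /m mulr_gt0 // invr_gt0.
have hc : (1 - 1 / r%:R) * n%:R = n%:R - m by rewrite /m; ring.
pose b := mu - alpha * n%:R.
have b0 : 0 <= b.
  rewrite /b subr_ge0; apply: ltW; apply: le_lt_trans muc; apply: ler_wpM2r => //; exact: ltW.
have cc (i : 'I_n) : 0 < mu - alpha * (turan_deg r i)%:R.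
  rewrite subr_gt0; apply: le_lt_trans muc; apply: (@le_trans _ _ (alpha * n%:R)).
    by apply: ler_wpM2l.
  by apply: ler_wpM2r => //; exact: ltW.
have eqi' i : (mu - alpha * (turan_deg r i)%:R) * w i = (1 - alpha) * (T - S i).
  by rewrite mulrBl eqi; ring.
have const (i j : 'I_n) : (j %% r == i %% r)%N -> w j = w i.
  move=> /eqP ji.
  have SE : S j = S i by rewrite /S; apply: eq_bigl => k; rewrite ji.
  have NE : N j = N i by rewrite /N; apply: eq_card => k; rewrite !inE ji.
  have dE : turan_deg r j = turan_deg r i.
    by apply/eqP; rewrite -(eqn_add2r (N i)) degE -NE degE.
  apply: (mulfI (lt0r_neq0 (cc i))).
  by rewrite eqi' -dE eqi' SE.
have SE i : S i = (N i)%:R * w i.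
  rewrite /S (eq_bigr (fun _ => w i)); last by move=> j; apply: const.
  rewrite (eq_bigl (fun j => j \in [pred j : 'I_n | (j %% r == i %% r)%N])) //.
  by rewrite sumr_const mulr_natl.
have key i : (b + (N i)%:R) * w i = (1 - alpha) * T.
  have h := eqi i; rewrite SE degR in h.
  apply/eqP; rewrite -subr_eq0.
  have -> : (b + (N i)%:R) * w i - (1 - alpha) * T =
    mu * w i - (alpha * (n%:R - (N i)%:R) * w i + (1 - alpha) * (T - (N i)%:R * w i)) by rewrite /b; ring.
  by rewrite h subrr.
have Dpos i : 0 < b + (N i)%:R by have := Npos i; rewrite -(ltr0n R); lra.
have T0 : T != 0.
  apply/negP => /eqP T0; move/negP: vn0; apply; apply/eqP/rowP => j.
  rewrite mxE; have := key j; rewrite T0 mulr0 => /eqP.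
  by rewrite mulf_eq0 (negbTE (lt0r_neq0 (Dpos j))) => /eqP.
have wE i : w i = (1 - alpha) * T / (b + (N i)%:R).
  by rewrite -(key i) mulrAC mulfV ?mul1r // lt0r_neq0.
have TE : T = \sum_i w i by [].
clearbody T.
pose X := \sum_i 1 / (b + (N i)%:R).
have h1 : 1 = (1 - alpha) * X.
  apply: (mulfI T0); rewrite mulr1; transitivity (\sum_i (1 - alpha) * T / (b + (N i)%:R)); first by rewrite {1}TE; apply: eq_bigr => i _; exact: wE.
  rewrite /X mulr_sumr mulr_sumr; apply: eq_bigr => i _; ring.
have hX : X <= n%:R / (b + m).
  apply: (@le_trans _ _ (\sum_i ((b + m^+2 * (1 / (N i)%:R)) / (b + m)^+2))).
    apply: ler_sum => i _; rewrite mulrA mulr1; apply: tangent => //; rewrite ltr0n; exact: Npos.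
  rewrite -mulr_suml big_split /= -mulr_sumr sumr_const card_ord.
  have hs := sum_invN R n r (leq_trans (isT : (0 < 2)%N) r2).
  have bm : 0 < b + m by lra.
  apply: (@le_trans _ _ ((b *+ n + m ^+ 2 * r%:R) / (b + m) ^+ 2)).
    rewrite ler_pM2r ?invr_gt0 ?exprn_gt0 // lerD2l ler_pM2l //; exact: exprn_gt0.
  have -> : b *+ n + m ^+ 2 * r%:R = n%:R * (b + m).
    by rewrite /m -mulr_natr; field; apply: lt0r_neq0.
  by rewrite expr2 invfM mulrA mulfK // lt0r_neq0.
have bm : 0 < b + m by lra.
have hX' : X * (b + m) <= n%:R by rewrite -ler_pdivlMr.
have a1' : 0 <= 1 - alpha.
  have : 1 / r%:R > 0 :> R by rewrite divr_gt0.
  lra.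
have : b + m <= (1 - alpha) * n%:R.
  have -> : b + m = (1 - alpha) * X * (b + m) by rewrite -h1 mul1r.
  rewrite -mulrA; apply: ler_wpM2l => //.
rewrite /b; lra.
Qed.
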